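(* Let $S>0$, let $D$ be a multiset of $n$ items with sizes in $(0,S]$, let $k\ge 1$ be an integer and $\epsilon\in(0,1/2]$. Consider the following algorithm. (1) Call an item small if its size is at most $\max\{1/n,\epsilon\}\cdot S$ and large otherwise; let $I$, $J$ be the multisets of small and large items. (2) Sort $J$ in non-increasing order of size and partition it into consecutive groups of $g=\lceil n(J)\epsilon^2\rceil$ items (the last group possibly smaller), where $n(J)=|J|$; round each item up to the largest size in its group; let $U'$ be the first group (the $g$ largest items) and $U''$ the instance formed by the remaining rounded items. (3) Put each of the $k$ copies of each item of $U'$ into its own bin. (4) Compute a feasible solution $\mathbf{x}$ of the fractional configuration linear program $F_k$ of $U''$ with $\mathbf{1}\cdot\mathbf{x}\le LIN(U''_k)+1$, and from it construct a $k$-times bin packing of $U''$ using at most $\mathbf{1}\cdot\mathbf{x}+\frac{m(U'')+k}{2}$ bins. (5) Replace each rounded item by its original item, obtaining a $k$-times bin packing of $J$. (6) Insert the $k$ copies of each small item one at a time, each into some existing bin where it fits and which contains no copy of the same item, opening a new bin only if no such bin exists. Then the number $bins(D_k)$ of bins produced satisfies $$bins(D_k)\le(1+2k\epsilon)\,OPT(D_k)+\frac{1}{2\epsilon^2}+(2k+1).$$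
   Context: For a multiset $D$ of items with sizes in $(0,S]$ and integer $k\ge1$, $D_k$ is the collection of $k$ copies of each item; a $k$-times bin packing assigns all copies to bins with total size at most $S$ per bin and no two copies of the same item in one bin; $OPT(D_k)$ is the minimum number of bins. For an instance $W$ with distinct sizes $c[1],\dots,c[m]$ ($m=m(W)$) occurring $n[1],\dots,n[m]$ times, a configuration is a vector $a\in\mathbb{Z}_{\ge0}^m$ with $a_i\le n[i]$ and $\sum_i a_ic[i]\le S$; let $A$ be the $m\times t$ matrix whose columns are all configurations and $\mathbf{n}=(n[1],\dots,n[m])$. The fractional configuration program $F_k$ of $W$ is: minimize $\mathbf{1}\cdot\mathbf{x}$ subject to $A\mathbf{x}=k\mathbf{n}$, $\mathbf{x}\in\mathbb{R}^t_{\ge0}$; its optimal value is $LIN(W_k)$. *)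

(* Defs.v *)
From HB Require Import structures.
From mathcomp Require Import all_boot all_order all_algebra.
From mathcomp Require Import boolp classical_sets reals.
Set Implicit Arguments. Unset Strict Implicit. Unset Printing Implicit Defensive.
Import Order.TTheory GRing.Theory Num.Theory.
Local Open Scope ring_scope.

Section Defs.
Variable R : realType.

(** Total size of the items in a bin.  A bin is a SET of items, since a
    k-times bin packing never puts two copies of the same item into one bin. *)
Definition load (T : finType) (sz : T -> R) (B : {set T}) : R :=
  \sum_(i in B) sz i.

Definition ktimes_packing (T : finType) (S : R) (sz : T -> R) (A : {set T})
    (k : nat) (P : seq {set T}) : Prop :=
  (forall B : {set T}, B \in P -> B \subset A /\ load sz B <= S) /\
  (forall i, i \in A -> count (fun B : {set T} => i \in B) P = k).

Definition OPT (T : finType) (S : R) (sz : T -> R) (A : {set T}) (k : nat) : R :=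
  inf [set (size P)%:R | P in [set P | ktimes_packing S sz A k P]]%classic.

(** Fractional configuration LP F_k of an instance W given as the multiset
    (sequence) of its item sizes. *)
Definition dsizes (W : seq R) : seq R := undup W.
Definition m_of (W : seq R) : nat := size (dsizes W).
Definition mult (W : seq R) (i : 'I_(m_of W)) : nat :=
  count_mem (nth 0 (dsizes W) i) W.

(** Candidate vectors a in Z_{>=0}^m (entries bounded by |W| >= n[i]). *)
Definition cvec (W : seq R) := {ffun 'I_(m_of W) -> 'I_(size W).+1}.

Definition is_config (S : R) (W : seq R) (a : cvec W) : bool :=
  [forall i, (a i <= mult i)%N] &&
  (\sum_i (a i : nat)%:R * nth 0 (dsizes W) i <= S).

(** x is a feasible solution of F_k (variables indexed by configurations;
    entries at non-configurations are forced to 0). *)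
Definition Fk_feasible (S : R) (W : seq R) (k : nat) (x : cvec W -> R) : Prop :=
  (forall a, 0 <= x a) /\
  (forall a, ~~ is_config S a -> x a = 0) /\
  (forall i, \sum_(a | is_config S a) (a i : nat)%:R * x a = (k * mult i)%:R).

Arguments Fk_feasible S W k x : clear implicits.

Definition Fk_obj (S : R) (W : seq R) (x : cvec W -> R) : R :=
  \sum_(a | is_config S a) x a.
Arguments Fk_obj S W x : clear implicits.

Definition LIN (S : R) (W : seq R) (k : nat) : R :=
  inf [set Fk_obj S W x | x in [set x | Fk_feasible S W k x]]%classic.

Inductive insert_run (T : finType) (S : R) (sz : T -> R) :
    seq {set T} -> seq T -> seq {set T} -> Prop :=
| ir_nil P : insert_run S sz P [::] P
| ir_old (P : seq {set T}) (j : nat) (i : T) s P' :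
    (j < size P)%N -> i \notin nth finset.set0 P j ->
    load sz (nth finset.set0 P j) + sz i <= S ->
    insert_run S sz (set_nth finset.set0 P j (i |: nth finset.set0 P j)%SET) s P' ->
    insert_run S sz P (i :: s) P'
| ir_new (P : seq {set T}) (i : T) s P' :
    (forall B : {set T}, B \in P -> i \in B \/ S < load sz B + sz i) ->
    insert_run S sz (rcons P [set i]%SET) s P' ->
    insert_run S sz P (i :: s) P'.

Definition alg_output (n : nat) (S : R) (D : 'I_n -> R) (k : nat) (eps : R)
    (Pfin : seq {set 'I_n}) : Prop :=
  let thr := Order.max (n%:R^-1) eps * S in
  let I := [set i | D i <= thr]%SET in
  let J := [set i | thr < D i]%SET in
  let g := `|Num.ceil (#|J|%:R * eps ^+ 2)|%N in
  exists ord : seq 'I_n,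
    [/\ perm_eq ord (enum J),
        sorted (fun a b => D b <= D a) ord &
        (* rounded size: size of the first (largest) item of its group *)
        let rnd i := D (nth i ord ((index i ord %/ g) * g)) in
        let U1 := [set i in J | (index i ord < g)%N]%SET in
        let U2 := [set i in J | (g <= index i ord)%N]%SET in
        let W2 := [seq rnd i | i <- enum U2] in
        exists (P4 : seq {set 'I_n}) (x : cvec W2 -> R),
          [/\ ktimes_packing S rnd U2 k P4,
              Fk_feasible S W2 k x,
              Fk_obj S W2 x <= LIN S W2 k + 1,
              (size P4)%:R <= Fk_obj S W2 x + ((m_of W2)%:R + k%:R) / 2 &
              exists ins : seq 'I_n,
                (forall i, count_mem i ins = if i \in I then k else 0%N) /\
                insert_run S D
                  (flatten (nseq k [seq [set i]%SET | i <- enum U1]) ++ P4)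
                  ins Pfin]].

End Defs.
Arguments Fk_feasible {R} S W k x.
Arguments Fk_obj {R} S W x.

(* Main.v *)
Require Import Defs.
From HB Require Import structures.
From mathcomp Require Import all_boot all_order all_algebra.
From mathcomp Require Import boolp classical_sets reals.
From mathcomp Require Import zify ring lra.
Import Order.TTheory GRing.Theory Num.Theory.
Local Open Scope ring_scope.
Set Implicit Arguments. Unset Strict Implicit.

Lemma count_set_nth (T : Type) (p : pred T) x0 (s : seq T) j y :
  (j < size s)%N -> (count p (set_nth x0 s j y) + p (nth x0 s j) = count p s + p y)%N.
Proof.
elim: s j => [|a s IH] [|j] //= Hj.
  lia.
by rewrite -!addnA IH.
Qed.

Lemma count_flatten_nseq (T : Type) (p : pred T) k (L : seq T) :
  count p (flatten (nseq k L)) = (k * count p L)%N.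
Proof. by elim: k => [|k IH] //=; rewrite count_cat IH mulSn. Qed.

Section RS.
Variable R : realType.

Lemma sum_seq_const (T : Type) (P : seq T) (p : pred T) (c : R) :
  \sum_(B <- P | p B) c = (count p P)%:R * c.
Proof.
elim: P => [|a P IH]; first by rewrite big_nil mul0r.
rewrite big_cons IH /=; case: (p a); rewrite ?add0n //=.
by rewrite natrD mulrDl mul1r.
Qed.

Lemma sum_seq_ind (T : Type) (P : seq T) (p : pred T) :
  \sum_(B <- P) ((p B)%:R : R) = (count p P)%:R.
Proof.
elim: P => [|a P IH]; first by rewrite big_nil.
by rewrite big_cons IH /= natrD.
Qed.

Lemma sum_seq_strict (T : eqType) (P : seq T) (p : pred T) (f g : T -> R) :
  (forall B, B \in P -> p B -> f B < g B) -> (0 < count p P)%N ->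
  \sum_(B <- P | p B) f B < \sum_(B <- P | p B) g B.
Proof.
elim: P => [|a P IH] //= H Hc.
rewrite !big_cons.
have Hle : \sum_(B <- P | p B) f B <= \sum_(B <- P | p B) g B.
  rewrite big_seq_cond [X in _ <= X]big_seq_cond; apply: ler_sum => B /andP[HB pB].
  by apply/ltW/H; rewrite ?inE ?HB ?orbT.
case pa: (p a).
  by apply: ltr_leD => //; apply: H; rewrite ?inE ?eqxx.
apply: IH; first by move=> B HB; apply: H; rewrite inE HB orbT.
by move: Hc; rewrite pa.
Qed.


Lemma ins_bound (T : finType) (S : R) (sz : T -> R) k (Q : pred T) (M : R)
    P s P' :
  insert_run S sz P s P' ->
  (forall j, count (fun B : {set T} => j \in B) P + count_mem j s = k)%N ->
  (forall i, i \in s -> Q i) ->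
  (forall (P'' : seq {set T}) i, Q i ->
       (forall j, count (fun B : {set T} => j \in B) P'' <= k)%N ->
       (count (fun B : {set T} => i \in B) P'' < k)%N ->
       (forall B, B \in P'' -> i \in B \/ S < load sz B + sz i) ->
       (size P'')%:R + 1 <= M) ->
  (size P' <= size P)%N \/ (size P')%:R <= M.
Proof.
elim => {P s P'}.
- by move=> P _ _ _; left.
- move=> P j i s P' Hj Hni _ _ IH Hinv HQ HM.
  have Hs : size (set_nth finset.set0 P j (i |: nth finset.set0 P j)) = size P.
    by rewrite size_set_nth; apply/maxn_idPr.
  rewrite -Hs; apply: IH => //.
  + move=> x; have := count_set_nth (fun B : {set T} => x \in B) finset.set0 (i |: nth finset.set0 P j) Hj.
    have := Hinv x => /=; rewrite in_setU1.
    case: (eqVneq x i) => [->|ne] /=.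
      rewrite (negbTE Hni) /=; have := Hinv i; rewrite /= eqxx; lia.
    lia.
  + by move=> x Hx; apply: HQ; rewrite inE Hx orbT.
- move=> P i s P' Hc _ IH Hinv HQ HM.
  have Hs : size (rcons P [set i]%SET) = (size P).+1 by rewrite size_rcons.
  have HMi : (size P)%:R + 1 <= M.
    apply: (HM _ i) => //.
    + by apply: HQ; rewrite inE eqxx.
    + by move=> x; have := Hinv x; lia.
    + by have := Hinv i => /=; rewrite eqxx /=; lia.
  case: IH.
  + move=> x; have := Hinv x; rewrite -cats1 count_cat /= finset.in_set1 eq_sym.
    by case: (i == x) => /=; lia.
  + by move=> x Hx; apply: HQ; rewrite inE Hx orbT.
  + exact: HM.
  + rewrite size_rcons => Hle; right; apply: le_trans HMi.
    by rewrite natr1 ler_nat.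
  + by right.
Qed.


Lemma load_ind (T : finType) (D : T -> R) (B : {set T}) :
  load D B = \sum_j ((j \in B)%:R * D j).
Proof.
rewrite /load big_mkcond; apply: eq_bigr => j _.
by case: (j \in B); rewrite ?mul1r ?mul0r.
Qed.

Lemma newbin_count (T : finType) (S : R) (D : T -> R) k
    (P : seq {set T}) i :
  (forall j, 0 <= D j) ->
  (forall j, count (fun B : {set T} => j \in B) P <= k)%N ->
  (forall B, B \in P -> i \in B \/ S < load D B + D i) ->
  (count (fun B : {set T} => i \notin B) P = 0)%N \/
  (count (fun B : {set T} => i \notin B) P)%:R * (S - D i)
     < k%:R * (\sum_j D j - D i).
Proof.
move=> D0 Hk Hc.
case: (posnP (count (fun B : {set T} => i \notin B) P)) => [->|Fpos]; first by left.
right.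
rewrite -sum_seq_const.
apply: (@lt_le_trans _ _ (\sum_(B <- P | i \notin B) load D B)).
  apply: sum_seq_strict => // B HB HiB.
  by case: (Hc B HB) => [/[!(negbTE HiB)]//|]; rewrite ltrBlDr.
apply: (@le_trans _ _ (\sum_(B <- P) \sum_(j | j != i) ((j \in B)%:R * D j))).
  rewrite big_mkcond /=; apply: ler_sum => B _.
  case: ifP => HiB.
    rewrite load_ind (bigD1 i) //= (negbTE HiB) mul0r add0r.
    done.
  by apply: sumr_ge0 => j _; apply: mulr_ge0 => //; rewrite ler0n.
rewrite exchange_big /= [X in _ <= _ * (X - _)](bigD1 i) //= addrC addrK mulr_sumr.
apply: ler_sum => j _.
rewrite -mulr_suml sum_seq_ind.
by apply: ler_wpM2r => //; rewrite ler_nat.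
Qed.

End RS.

Lemma arith_new (R : realFieldType) (S Sg Di F O e kk nn : R) :
  0 < S -> 0 <= Di -> Di <= S -> 0 <= F -> 1 <= kk -> 0 < e -> e <= 1/2 ->
  (nn = 1 \/ 2 <= nn) ->
  Di <= Num.max (nn^-1) e * S -> Sg <= nn * S -> kk * Sg <= O * S ->
  F * (S - Di) < kk * (Sg - Di) -> (nn = 1 -> Sg = Di) ->
  F <= (1 + 2 * kk * e) * O + 1 / (2 * e ^+ 2) + kk + 1.
Proof.
move=> S0 D0 DS F0 k1 e0 e2 hn hD hSg hO hF hn1.
have hpos : 0 <= F * (S - Di) by apply: mulr_ge0; lra.
have SgD : Di < Sg by nra.
have O0 : 0 <= O.
  have : 0 <= O * S by nra.
  by rewrite pmulr_lge0.
have hie : 0 < 1 / (2 * e ^+ 2) by apply: divr_gt0 => //; nra.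
have nn1 : 1 <= nn by case: hn => [->|]; lra.
have nn0 : 0 < nn by lra.
case: (leP (nn^-1) e) => hne.
  rewrite (max_r hne) in hD.
  have h1 : F * (1 - e) * S <= O * S by nra.
  have h2 : F * (1 - e) <= O by rewrite -(ler_pM2r S0).
  have h3 : F <= (1 + 2 * e) * (F * (1 - e)).
    have : 0 <= F * (e * (1 - 2 * e)) by apply: mulr_ge0 => //; nra.
    nra.
  have h4 : (1 + 2 * e) * O <= (1 + 2 * kk * e) * O.
    have : 0 <= (2 * e * O) * (kk - 1) by apply: mulr_ge0; nra.
    nra.
  nra.
rewrite (max_l (ltW hne)) in hD.
case: hn => hn.
  by move: (hn1 hn) => h; rewrite h in hF; nra.
have hD' : nn * Di <= S.
  by move: hD; rewrite -ler_pdivlMl // mulrA mulrC mulrA mulVf ?mul1r //; lra.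
have h1 : F * (nn - 1) * S < nn * kk * Sg.
  have : F * (nn - 1) * S <= nn * (F * (S - Di)) by nra.
  have h5 : nn * (F * (S - Di)) < nn * (kk * (Sg - Di)) by rewrite ltr_pM2l.
  have h6 : 0 <= nn * kk * Di by apply: mulr_ge0 => //; apply: mulr_ge0; lra.
  lra.
set y := kk * Sg / S.
have hy : kk * Sg = y * S by rewrite /y mulrVK ?unitfE //; lra.
have y0 : 0 <= y.
  have : 0 <= y * S by rewrite -hy; apply: mulr_ge0; lra.
  by rewrite pmulr_lge0.
have hyO : y <= O by rewrite -(ler_pM2r S0) -hy.
have hyk : y <= kk * nn.
  rewrite -(ler_pM2r S0) -hy; nra.
have h2 : F * (nn - 1) < nn * y.
  rewrite -(ltr_pM2r S0); nra.
have hne' : e * nn < 1.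
    by move: hne; rewrite -(ltr_pM2r nn0) mulVf //; lra.
case: (leP 1 (e * kk * nn)) => hekn.
  have h3 : nn * y <= (1 + 2 * kk * e) * y * (nn - 1).
    have h7 : 0 <= kk * e * (nn - 2) by apply: mulr_ge0; nra.
    have h8 : 0 <= y * (2 * kk * e * (nn - 1) - 1) by apply: mulr_ge0; nra.
    nra.
  have h4 : F <= (1 + 2 * kk * e) * y.
    have hn1' : 0 < nn - 1 by lra.
    rewrite -(ler_pM2r hn1'); lra.
  nra.
have h3 : F <= y + 2 * kk.
  nra.
have h4 : kk - 1 <= 1 / (2 * e ^+ 2).
  rewrite ler_pdivlMr; last nra.
  have : e * kk * 2 < 1 by nra.
  nra.
have : 0 <= 2 * kk * e * O by apply: mulr_ge0 => //; nra.
nra.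
Qed.

Lemma arith_init (R : realFieldType) (U g Jc P4 Ob L O m e kk : R) :
  0 < e -> e <= 1/2 -> 1 <= kk -> 0 <= U -> U <= g -> g <= Jc * e^+2 + 1 -> 0 <= Jc ->
  kk * Jc * e <= O -> P4 <= Ob + (m + kk) / 2 -> Ob <= L + 1 -> L <= O ->
  m <= 1 / e^+2 ->
  kk * U + P4 <= (1 + 2 * kk * e) * O + 1 / (2 * e ^+ 2) + (2 * kk + 1).
Proof.
move=> e0 e2 k1 U0 Ug gJ J0 hO hP hOb hL hm.
have O0 : 0 <= O.
  apply: le_trans hO; apply: mulr_ge0; last lra.
  apply: mulr_ge0 => //; lra.
have h1 : kk * U <= kk * g by apply: ler_wpM2l; lra.
have h2 : kk * g <= e * (kk * Jc * e) + kk.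
  have : kk * g <= kk * (Jc * e^+2 + 1) by apply: ler_wpM2l; lra.
  by rewrite expr2; lra.
have h3 : e * (kk * Jc * e) <= e * O by apply: ler_wpM2l; lra.
have h4 : e * O <= 2 * kk * e * O.
  have eO : 0 <= e * O by apply: mulr_ge0 => //; lra.
  have : 0 <= e * O * (2 * kk - 1) by apply: mulr_ge0 => //; lra.
  nra.
have h5 : m / 2 <= 1 / (2 * e ^+ 2).
  rewrite invfM mulrA mul1r mulrC; apply: ler_wpM2l => //.
    lra.
  by move: hm; rewrite mul1r.
have h6 : P4 <= O + 1 + m / 2 + kk / 2 by lra.
lra.
Qed.


Section LINsec.
Variable R : realType.

Lemma ind_sum_nth (s : seq R) (v : R) :
  \sum_(i < size s) ((v == nth 0 s i)%:R : R) = (count_mem v s)%:R.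
Proof.
rewrite -(big_mkord xpredT (fun i => ((v == nth 0 s i)%:R : R))).
rewrite -(big_nth 0 xpredT (fun x => ((v == x)%:R : R))) sum_seq_ind.
by congr (_%:R); apply: eq_count => x; rewrite /= eq_sym.
Qed.

Lemma sum_subset_le (T : finType) (A B : {set T}) (F : T -> R) :
  A \subset B -> (forall j, 0 <= F j) ->
  \sum_(j in A) F j <= \sum_(j in B) F j.
Proof.
move=> AB F0; rewrite [X in _ <= X](big_setID A) /=.
rewrite (finset.setIidPr AB) lerDl; exact: sumr_ge0.
Qed.

Variables (n : nat) (S : R) (D : 'I_n -> R) (k : nat) (J : {set 'I_n})
  (ord : seq 'I_n) (g : nat).
Hypotheses (D0 : forall i, 0 <= D i) (Hperm : perm_eq ord (enum J))
  (Hsort : sorted (fun a b => D b <= D a) ord) (g0 : (0 < #|J|)%N -> (0 < g)%N).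

Lemma LIN_le (Q : seq {set 'I_n}) :
  ktimes_packing S D [set: 'I_n] k Q ->
  LIN S [seq D (nth i ord ((index i ord %/ g) * g)) | i <- enum [set i in J | (g <= index i ord)%N]] k
    <= (size Q)%:R.
Proof.
move=> [HQ1 HQ2].
set U2 := [set i in J | (g <= index i ord)%N].
set rnd := fun i => D (nth i ord ((index i ord %/ g) * g)).
set W2 := [seq rnd i | i <- enum U2].
have Hord : forall u, (u \in ord) = (u \in J).
  by move=> u; rewrite (perm_mem Hperm) mem_enum.
have Huniq : uniq ord by rewrite (perm_uniq Hperm) enum_uniq.
have HU2 : forall u, u \in U2 -> [/\ u \in ord, (g <= index u ord)%N & (index u ord < size ord)%N].
  move=> u; rewrite inE => /andP[uJ gu]; rewrite Hord uJ; split => //.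
  by rewrite index_mem Hord.
pose phi u := nth u ord (index u ord - g).
have phi_inj : {in U2 &, injective phi}.
  move=> u v /HU2[uo gu us] /HU2[vo gv vs] /eqP.
  have us' : (index u ord - g < size ord)%N := leq_ltn_trans (leq_subr _ _) us.
  have vs' : (index v ord - g < size ord)%N := leq_ltn_trans (leq_subr _ _) vs.
  rewrite /phi (set_nth_default v u) // nth_uniq //.
  move=> /eqP h; have h' : index u ord = index v ord by rewrite -(subnK gu) -(subnK gv) h.
  by rewrite -(nth_index u uo) h' (set_nth_default v) ?nth_index.
have rnd_le : forall u, u \in U2 -> rnd u <= D (phi u).
  move=> u /HU2[uo gu us]; rewrite /rnd /phi.
  have gpos : (0 < g)%N by apply: g0; apply/card_gt0P; exists u; rewrite -Hord.
  have := @sorted_leq_nth _ (fun a b => D b <= D a) _ _ u ord Hsort (index u ord - g)%N ((index u ord %/ g) * g)%N.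
  apply.
  - by move=> a b c /= h1 h2; apply: le_trans h1.
  - by move=> a /=.
  - by rewrite inE /=; lia.
  - rewrite inE /=; have := leq_trunc_div (index u ord) g; lia.
  - have := ltn_ceil (index u ord) gpos; lia.
set m := m_of W2.
set c := fun i : 'I_m => nth 0 (dsizes W2) i.
have Hmult : forall i : 'I_m, mult i = (\sum_(u in U2 | rnd u == c i) 1)%N.
  move=> i; rewrite /mult count_map -big_enum_cond sum1_count.
  by apply: eq_count => u.
pose cnt (B : {set 'I_n}) (i : 'I_m) := (\sum_(u in U2 | rnd u == c i) (phi u \in B))%N.
have cnt_le : forall B i, (cnt B i <= mult i)%N.
  by move=> B i; rewrite Hmult; apply: leq_sum => u _; case: (_ \in _).
have mult_le : forall i : 'I_m, (mult i <= size W2)%N.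
  by move=> i; rewrite /mult count_size.
pose cfg (B : {set 'I_n}) : cvec W2 := [ffun i => inord (cnt B i)].
have cfgE : forall B i, (cfg B i : nat) = cnt B i.
  by move=> B i; rewrite /cfg ffunE inordK // ltnS (leq_trans (cnt_le B i)).
have Hpart : forall f : 'I_n -> R,
    \sum_(i : 'I_m) \sum_(u in U2 | rnd u == c i) f u = \sum_(u in U2) f u.
  move=> f.
  have -> : \sum_(i : 'I_m) \sum_(u in U2 | rnd u == c i) f u =
            \sum_(i : 'I_m) \sum_(u in U2) ((rnd u == c i)%:R * f u).
    apply: eq_bigr => i _; rewrite big_mkcondr /=; apply: eq_bigr => u _.
    by case: (_ == _); rewrite ?mul1r ?mul0r.
  rewrite exchange_big /=; apply: eq_bigr => u uU.
  rewrite -mulr_suml ind_sum_nth count_uniq_mem ?undup_uniq // mem_undup.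
  by rewrite map_f ?mem_enum // mul1r.
have cfg_conf : forall B, B \in Q -> is_config S (cfg B).
  move=> B BQ; apply/andP; split.
    by apply/forallP => i; rewrite cfgE cnt_le.
  apply: le_trans (HQ1 B BQ).2.
  have -> : \sum_i ((cfg B i : nat)%:R * nth 0 (dsizes W2) i) =
            \sum_(i : 'I_m) \sum_(u in U2 | rnd u == c i) ((phi u \in B)%:R * rnd u).
    apply: eq_bigr => i _; rewrite cfgE /cnt natr_sum mulr_suml.
    by apply: eq_bigr => u /andP[_ /eqP ->].
  rewrite Hpart.
  apply: (@le_trans _ _ (\sum_(u in U2) ((phi u \in B)%:R * D (phi u)))).
    apply: ler_sum => u uU; apply: ler_wpM2l; [by rewrite ler0n | exact: rnd_le].
  rewrite [X in X <= _](eq_bigr (fun u => if phi u \in B then D (phi u) else 0)); last first.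
    by move=> u _; case: (_ \in _); rewrite ?mul1r ?mul0r.
  rewrite -big_mkcondr /=.
  set A := [set u in U2 | phi u \in B].
  have -> : \sum_(u in U2 | phi u \in B) D (phi u) = \sum_(u in A) D (phi u).
    by apply: eq_bigl => u; rewrite /A inE.
  have injA : {in A &, injective phi}.
    move=> u v Hu Hv; apply: phi_inj; [move: Hu | move: Hv]; rewrite /A /U2 !inE; by case/andP.
  rewrite -(big_imset D injA) /load; apply: sum_subset_le => //.
  by apply/fintype.subsetP => j /imsetP[u]; rewrite /A inE => /andP[_ uB] ->.
pose x (a : cvec W2) : R := (count (fun B => cfg B == a) Q)%:R.
have Hsumx : forall h : cvec W2 -> R,
    \sum_(a | is_config S a) h a * x a = \sum_(B <- Q) h (cfg B).
  move=> h.
  under eq_bigr => a _ do rewrite /x -sum_seq_ind mulr_sumr.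
  rewrite exchange_big /= big_seq [RHS]big_seq; apply: eq_bigr => B BQ.
  rewrite (bigD1 (cfg B)) ?cfg_conf //= eqxx mulr1 big1 ?addr0 // => a /andP[_ ne].
  by rewrite eq_sym (negbTE ne) mulr0.
have Hfeas : Fk_feasible S W2 k x.
  split; [| split].
  - by move=> a; rewrite /x ler0n.
  - move=> a Hna; rewrite /x.
    suff -> : count (fun B => cfg B == a) Q = 0%N by [].
    apply/eqP; rewrite -leqn0 leqNgt -has_count; apply/hasPn => B BQ.
    by apply/negP => /eqP e; rewrite -e cfg_conf in Hna.
  - move=> i; rewrite (Hsumx (fun a => (a i : nat)%:R)).
    under eq_bigr => B _ do rewrite cfgE /cnt natr_sum.
    rewrite exchange_big /= Hmult big_distrr natr_sum /=.
    apply: eq_bigr => u _; rewrite sum_seq_ind HQ2 ?in_setT //.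
    by rewrite muln1.
have Hobj : Fk_obj S W2 x = (size Q)%:R.
  rewrite /Fk_obj.
  have := Hsumx (fun _ => 1); under eq_bigr => a _ do rewrite mul1r.
  move=> ->; have := sum_seq_const Q xpredT (1 : R).
  by rewrite count_predT mulr1.
rewrite /LIN -Hobj.
apply: ge_inf; last by exists x.
exists 0 => z [x' Hx' <-]; rewrite /Fk_obj; apply: sumr_ge0 => a _.
exact: (Hx'.1 a).
Qed.
End LINsec.


Section Esec.
Variable R : realType.
Variables (n : nat) (S : R) (D : 'I_n -> R) (k : nat) (J : {set 'I_n})
  (ord : seq 'I_n) (g : nat).
Hypotheses (Hperm : perm_eq ord (enum J)) (g0 : (0 < #|J|)%N -> (0 < g)%N).

Lemma m_bound :
  (m_of [seq D (nth i ord ((index i ord %/ g) * g)) | i <- enum [set i in J | (g <= index i ord)%N]] * g <= #|J|)%N.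
Proof.
set U2 := [set i in J | (g <= index i ord)%N].
set W2 := [seq _ | i <- enum U2].
have Hord : forall u, (u \in ord) = (u \in J).
  by move=> u; rewrite (perm_mem Hperm) mem_enum.
have Hsz : size ord = #|J| by rewrite (perm_size Hperm) cardE.
case: (pickP (fun _ : 'I_n => true)) => [x0 _|none]; last first.
  have -> : W2 = [::].
    by rewrite /W2; case: (enum U2) (mem_enum U2) => // a l; have := none a.
  by rewrite /m_of /dsizes.
set L := [seq D (nth x0 ord (t * g)) | t <- iota 1 ((size ord - 1) %/ g)].
have sub : {subset undup W2 <= L}.
  move=> v; rewrite mem_undup => /mapP[u]; rewrite mem_enum inE => /andP[uJ gu] ->.
  have us : (index u ord < size ord)%N by rewrite index_mem Hord.
  have gpos : (0 < g)%N by apply: g0; apply/card_gt0P; exists u.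
  apply/mapP; exists (index u ord %/ g)%N.
    rewrite mem_iota divn_gt0 // gu /= add1n ltnS leq_div2r //; lia.
  rewrite (set_nth_default x0) //.
  by apply: leq_ltn_trans us; apply: leq_trunc_div.
have := uniq_leq_size (undup_uniq W2) sub.
rewrite size_map size_iota /m_of /dsizes -/W2 => h.
apply: (leq_trans (leq_mul h (leqnn g))).
rewrite -Hsz; apply: leq_trans (leq_trunc_div _ _) _; lia.
Qed.

Lemma U1_bound : (#|[set i in J | (index i ord < g)%N]| <= g)%N.
Proof.
have Hord : forall u, (u \in ord) = (u \in J).
  by move=> u; rewrite (perm_mem Hperm) mem_enum.
apply: (@leq_trans #|take g ord|).
  apply: subset_leq_card; apply/fintype.subsetP => u; rewrite inE => /andP[uJ ug].
  by rewrite in_take ?Hord.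
by apply: leq_trans (card_size _) _; rewrite size_take; apply: geq_minl.
Qed.

End Esec.

Section Osec.
Variable R : realType.
Variables (n : nat) (S : R) (D : 'I_n -> R) (k : nat).
Hypotheses (S0 : 0 < S) (D0 : forall i, 0 <= D i) (DS : forall i, D i <= S).

Lemma packing_lb Q : ktimes_packing S D [set: 'I_n] k Q ->
  k%:R * \sum_j D j <= (size Q)%:R * S.
Proof.
move=> [H1 H2].
apply: (@le_trans _ _ (\sum_(B <- Q) load D B)); last first.
  have := sum_seq_const Q xpredT S; rewrite count_predT => <-.
  rewrite big_seq [X in _ <= X]big_seq.
  by apply: ler_sum => B BQ; exact: (H1 B BQ).2.
under [X in _ <= X]eq_bigr => B _ do rewrite load_ind.
rewrite exchange_big /= mulr_sumr; apply: ler_sum => j _.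
by rewrite -mulr_suml sum_seq_ind H2 ?in_setT.
Qed.

Lemma mem_flatten_nseq (T : eqType) (L : seq T) x m :
  x \in flatten (nseq m L) -> x \in L.
Proof. by elim: m => //= m IH; rewrite mem_cat => /orP[|/IH]. Qed.

Lemma count_singletons (A : {set 'I_n}) j :
  count (fun B : {set 'I_n} => j \in B) [seq [set i]%SET | i <- enum A] = (j \in A).
Proof.
rewrite count_map -mem_enum -(count_uniq_mem _ (enum_uniq A)).
by apply: eq_count => i /=; rewrite finset.in_set1.
Qed.

Lemma packing_ex : ktimes_packing S D [set: 'I_n] k
  (flatten (nseq k [seq [set i]%SET | i <- enum [set: 'I_n]])).
Proof.
split.
  move=> B /mem_flatten_nseq /mapP[i _ ->]; split; first exact: finset.subsetT.
  by rewrite /load big_set1.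
by move=> i _; rewrite count_flatten_nseq count_singletons finset.in_setT muln1.
Qed.

Lemma OPT_lb : k%:R * \sum_j D j <= OPT S D [set: 'I_n] k * S.
Proof.
rewrite -ler_pdivrMr //; apply: lb_le_inf.
  by exists (size (flatten (nseq k [seq [set i]%SET | i <- enum [set: 'I_n]])))%:R; exists (flatten (nseq k [seq [set i]%SET | i <- enum [set: 'I_n]])) => //; exact: packing_ex.
move=> z [Q HQ <-]; rewrite ler_pdivrMr //; exact: packing_lb.
Qed.

Lemma OPT_ge (v : R) : (forall Q, ktimes_packing S D [set: 'I_n] k Q -> v <= (size Q)%:R) ->
  v <= OPT S D [set: 'I_n] k.
Proof.
move=> H; apply: lb_le_inf.
  by exists (size (flatten (nseq k [seq [set i]%SET | i <- enum [set: 'I_n]])))%:R; exists (flatten (nseq k [seq [set i]%SET | i <- enum [set: 'I_n]])) => //; exact: packing_ex.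
by move=> z [Q HQ <-]; apply: H.
Qed.

End Osec.


Theorem theorem5 (R : realType) (S : R) (n : nat) (D : 'I_n -> R) (k : nat)
    (eps : R) (P : seq {set 'I_n}) :
  0 < S ->
  (forall i, 0 < D i <= S) ->
  (0 < k)%N ->
  0 < eps <= 1 / 2 ->
  alg_output S D k eps P ->
  (size P)%:R <= (1 + 2 * k%:R * eps) * OPT S D [set: 'I_n] k
                 + 1 / (2 * eps ^+ 2) + (2 * k + 1)%:R.
Proof.
move=> S0 HD k0 /andP[e0 e2].
rewrite /alg_output.
set thr := Order.max _ _ * S.
set I := [set i | D i <= thr]%SET.
set J := [set i | thr < D i]%SET.
set g := `|Num.ceil _|%N.
move=> [ord [Hperm Hsort]].
set U1 := [set i in J | (index i ord < g)%N]%SET.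
set U2 := [set i in J | (g <= index i ord)%N]%SET.
move=> [P4 [x [HP4 Hfeas Hobj Hsize [ins [Hins Hrun]]]]].
have D0 : forall i, 0 <= D i by move=> i; case/andP: (HD i) => /ltW.
have DS : forall i, D i <= S by move=> i; case/andP: (HD i).
set O := OPT S D [set: 'I_n] k.
have HO : k%:R * \sum_j D j <= O * S := OPT_lb k S0 DS.
set tgt := (1 + 2 * k%:R * eps) * O + 1 / (2 * eps ^+ 2) + (2 * k + 1)%:R.
have Jpos_g : (0 < #|J|)%N -> (0 < g)%N.
  move=> Jp; rewrite /g absz_gt0 ceil_neq0; apply/orP; right.
  by apply: mulr_gt0; [rewrite ltr0n | apply: exprn_gt0].
have gR : g%:R = (Num.ceil (#|J|%:R * eps ^+ 2))%:~R :> R.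
  rewrite /g natr_absz ger0_norm // ceil_ge0.
  apply: lt_le_trans (_ : (0:R) <= _); first lra.
  by apply: mulr_ge0; [rewrite ler0n | apply: exprn_ge0; lra].
have g_up : g%:R <= #|J|%:R * eps ^+ 2 + 1 :> R.
  have := ceilB1_lt (#|J|%:R * eps ^+ 2); rewrite intrB /= -gR; lra.
have g_lo : #|J|%:R * eps ^+ 2 <= g%:R :> R by rewrite gR; exact: ceil_ge.
have HLIN := OPT_ge DS (fun Q HQ => LIN_le D0 Hperm Hsort Jpos_g HQ).
have {}HLIN := HLIN k.
set W2 := [seq D (nth i ord (index i ord %/ g * g)) | i <- enum U2] in Hfeas Hobj Hsize HLIN.
have Hm : (m_of W2)%:R <= 1 / eps ^+ 2 :> R.
  case: (posnP #|J|) => [J0|Jp].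
    suff -> : m_of W2 = 0%N by rewrite divr_ge0 // ?exprn_ge0; lra.
    apply/eqP; rewrite -leqn0 -J0 /m_of /dsizes.
    apply: leq_trans (size_undup _) _; rewrite size_map -cardE.
    by apply: subset_leq_card; apply/fintype.subsetP => u; rewrite inE => /andP[].
  have hmb := m_bound D Hperm Jpos_g; rewrite -/U2 -/W2 in hmb.
  have hmR : (m_of W2)%:R * g%:R <= #|J|%:R :> R by rewrite -natrM ler_nat.
  have Jr : (0 : R) < #|J|%:R by rewrite ltr0n.
  have m0 : (0 : R) <= (m_of W2)%:R by rewrite ler0n.
  have h1 : (m_of W2)%:R * (#|J|%:R * eps ^+ 2) <= #|J|%:R :> R.
    by apply: le_trans hmR; apply: ler_wpM2l.
  have h2 : (m_of W2)%:R * eps ^+ 2 <= 1 :> R.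
    rewrite -(ler_pM2r Jr) mul1r; apply: le_trans h1 => //=; lra.
  by rewrite ler_pdivlMr ?exprn_gt0 // mul1r.
have thr_e : eps * S <= thr.
  by rewrite /thr ler_wpM2r ?(ltW S0) // le_max lexx orbT.
have HJO : k%:R * #|J|%:R * eps <= O.
  rewrite -(ler_pM2r S0); apply: le_trans HO.
  rewrite -mulrA -mulrA; apply: ler_wpM2l; first by rewrite ler0n.
  apply: (@le_trans _ _ (\sum_(j in J) D j)).
    rewrite -mulrA mulr_natl -sumr_const; apply: ler_sum => j.
    rewrite inE => /ltW h; exact: le_trans thr_e h.
  rewrite [X in _ <= X](bigID (fun j => j \in J)) /= lerDl.
  by apply: sumr_ge0 => j _.
have HP4c : forall j, count (fun B : {set 'I_n} => j \in B) P4 = if j \in U2 then k else 0%N.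
  move=> j; case: ifP => jU; first exact: HP4.2 j jU.
  apply/eqP; rewrite -leqn0 leqNgt -has_count; apply/hasPn => B BP.
  apply/negP => jB; have := (HP4.1 B BP).1 => /fintype.subsetP /(_ j jB).
  by rewrite jU.
have Hinv : forall j, (count (fun B : {set 'I_n} => j \in B)
     (flatten (nseq k [seq [set i]%SET | i <- enum U1]) ++ P4) + count_mem j ins = k)%N.
  move=> j; rewrite count_cat count_flatten_nseq count_singletons HP4c Hins.
  rewrite /I /J /U1 /U2 !inE.
  case: (leP (D j) thr) => h /=; first by rewrite muln0.
  case: (ltnP (index j ord) g) => h' /=.
    by rewrite muln1 !addn0.
  by rewrite muln0 add0n addn0.
have HinsQ : forall i, i \in ins -> i \in I.
  move=> i iin; apply/negPn/negP => niI; move: (Hins i); rewrite (negbTE niI).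
  by move/count_memPn; rewrite iin.
have O0 : 0 <= O.
  have : 0 <= O * S.
    apply: le_trans HO; apply: mulr_ge0; first by rewrite ler0n.
    by apply: sumr_ge0 => j _.
  by rewrite pmulr_lge0.
have ie0 : 0 <= 1 / (2 * eps ^+ 2) by apply: divr_ge0 => //; apply: mulr_ge0 => //; apply: exprn_ge0; lra.
have tgt_ge : forall F : R, F <= (1 + 2 * k%:R * eps) * O + 1 / (2 * eps ^+ 2) + k%:R + 1 ->
    k%:R + F <= tgt.
  by move=> F hF; rewrite /tgt natrD natrM; lra.
have HSg : \sum_j D j <= n%:R * S.
  apply: (@le_trans _ _ (\sum_(j : 'I_n) S)); first by apply: ler_sum => j _.
  by rewrite sumr_const card_ord mulr_natl.
have HM : forall (P'' : seq {set 'I_n}) i, i \in I ->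
   (forall j, count (fun B : {set 'I_n} => j \in B) P'' <= k)%N ->
   (count (fun B : {set 'I_n} => i \in B) P'' < k)%N ->
   (forall B, B \in P'' -> i \in B \/ S < load D B + D i) ->
   (size P'')%:R + 1 <= tgt.
  move=> P'' i iI Hc Hci Hcond.
  have Hsz : size P'' = (count (fun B : {set 'I_n} => i \in B) P'' + count (fun B : {set 'I_n} => i \notin B) P'')%N.
    by rewrite -(count_predC (fun B : {set 'I_n} => i \in B) P'').
  case: (newbin_count D0 Hc Hcond) => [F0|HF].
    have k0' : (0:R) <= k%:R by rewrite ler0n.
    have hkO : 0 <= 2 * k%:R * eps * O by apply: mulr_ge0 => //; nra.
    apply: le_trans (tgt_ge 0 _); last by lra.
    by rewrite addr0 Hsz F0 addn0 natr1 ler_nat.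
  set F := count (fun B : {set 'I_n} => i \notin B) P'' in Hsz HF.
  have hF := @arith_new _ S (\sum_j D j) (D i) F%:R O eps k%:R n%:R S0 (D0 i) (DS i) (ler0n _ _).
  have k1 : (1 : R) <= k%:R by rewrite ler1n.
  have n0 : (0 < n)%N := leq_ltn_trans (leq0n i) (ltn_ord i).
  have hn : (n%:R : R) = 1 \/ 2 <= (n%:R : R).
    case: (ltngtP n 1) => hn1.
    - by move: n0; rewrite ltnNge -ltnS hn1.
    - by right; rewrite (ler_nat R 2 n).
    - by left; rewrite hn1.
  have hDi : D i <= Num.max n%:R^-1 eps * S by move: iI; rewrite inE.
  have hn1 : (n%:R : R) = 1 -> \sum_j D j = D i.
    move=> n1R; have n1 : n = 1%N by apply/eqtype.eqP; rewrite -(@eqr_nat R) n1R.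
    rewrite (bigD1 i) //= big1 ?addr0 // => j ne.
    suff e : j = i by rewrite e eqxx in ne.
    apply: val_inj => /=.
    have hi : (i < 1)%N by move: (ltn_ord i); rewrite {2}n1.
    have hj : (j < 1)%N by move: (ltn_ord j); rewrite {2}n1.
    by move: hi hj; rewrite !ltnS !leqn0 => /eqtype.eqP -> /eqtype.eqP ->.
  have hF' := hF k1 e0 e2 hn hDi HSg HO HF hn1.
  apply: le_trans (tgt_ge _ hF').
  by rewrite Hsz natr1 -natrD ler_nat -addSn leq_add2r.
case: (ins_bound (Q := fun i => i \in I) (M := tgt) Hrun Hinv HinsQ HM) => [Hle|//].
apply: (@le_trans _ _ (size (flatten (nseq k [seq [set i]%SET | i <- enum U1]) ++ P4))%:R).
  by rewrite ler_nat.
rewrite size_cat natrD.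
have Hfl : size (flatten (nseq k [seq [set i]%SET | i <- enum U1])) = (k * #|U1|)%N.
  by rewrite -count_predT count_flatten_nseq count_predT size_map -cardE.
rewrite Hfl natrM.
have HU1 : (#|U1| <= g)%N := U1_bound g Hperm.
have k1 : (1 : R) <= k%:R by rewrite ler1n.
have := @arith_init _ (#|U1|%:R) (g%:R) (#|J|%:R) ((size P4)%:R) (Fk_obj S W2 x)
  (LIN S W2 k) O ((m_of W2)%:R) eps (k%:R) e0 e2 k1 (ler0n _ _) _ g_up (ler0n _ _)
  HJO Hsize Hobj HLIN Hm.
rewrite /tgt natrD natrM; apply.
by rewrite ler_nat.
Qed.
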